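(* Let $\mathcal{S}$ be a finite set, $\Pi$ an irreducible stochastic matrix on $\mathcal{S}$, $\kappa(x,y):=\pi_{xy}-\mathbf{1}_{x=y}$, $\mathcal{K}=\Pi-\mathrm{I}$, and $Q=(q(y))$ the unique invariant distribution of $\Pi$. Assume detailed balance: $q(y)\kappa(y,z)=q(z)\kappa(z,y)$ for all $y,z$. Let $(P(t))_{t\ge0}$, $P(t)=(p(t,y))_{y\in\mathcal{S}}$, be the curve of time-marginal laws of the continuous-time Markov chain with generator $\mathcal{K}$ started from an initial distribution $P(0)$ with all entries positive (equivalently $\partial_t p(t,y)=\sum_z p(t,z)\kappa(z,y)$). Then, for every $t_0\in(0,\infty)$, the curve $(P(t))_{t\ge t_0}$ is of steepest descent locally at $t=t_0$ for the variance functional $V(P\,|\,Q):=\sum_y q(y)\big(p(y)/q(y)\big)^2-1$, relative to the metric $$\varrho(P_1,P_2):=\big\|\boldsymbol{\ell}_1-\boldsymbol{\ell}_2\big\|_{\mathbb{H}^{-1}(\mathcal{S},Q)},\qquad P_i=\boldsymbol{\ell}_iQ .$$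
   Context: $\mathcal{M}$ denotes the set of probability vectors on $\mathcal{S}$ with strictly positive entries; for $P\in\mathcal{M}$, $P=\boldsymbol{\ell}Q$ means $\ell(y)=p(y)/q(y)$. A smooth curve $(P(t))_{t_0\le t<\infty}\subset\mathcal{M}$ is of steepest descent locally at $t_0$ for a smooth functional $F:\mathcal{M}\to\mathbb{R}$ relative to a metric $\varrho$ on $\mathcal{M}$ if it minimizes, among all smooth curves $(\widetilde P(t))_{t_0\le t<\infty}\subset\mathcal{M}$ with $\widetilde P(t_0)=P(t_0)$, the quantity $\lim_{h\downarrow0}\big(F(\widetilde P(t_0+h))-F(P(t_0))\big)/\varrho(\widetilde P(t_0+h),P(t_0))$. Notation: $\nabla f(x,y):=f(y)-f(x)$; $\mathcal{Z}:=\{(x,y):\kappa(x,y)>0\}$, $c(x,y):=\frac12\kappa(x,y)q(x)$, $\|F\|^2_{\mathbb{L}^2(\mathcal{Z},C)}:=\sum_{(x,y)\in\mathcal{Z}}c(x,y)F(x,y)^2$; $\|f\|_{\mathbb{H}^{-1}(\mathcal{S},Q)}:=\|\nabla g\|_{\mathbb{L}^2(\mathcal{Z},C)}$ for any $g$ with $\mathcal{K}g=f$ if $f$ is in the range of $\mathcal{K}$, and $:=+\infty$ otherwise. *)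

(* Defs.v *)
From HB Require Import structures.
From mathcomp Require Import all_boot all_order all_algebra.
From mathcomp Require Import all_classical all_reals all_analysis.
Set Implicit Arguments. Unset Strict Implicit. Unset Printing Implicit Defensive.
Import Order.TTheory GRing.Theory Num.Theory.
Import numFieldNormedType.Exports.
Local Open Scope classical_set_scope.
Local Open Scope ring_scope.

Section Defs.
Variables (R : realType) (S : finType).

Fixpoint mpow (Pi : S -> S -> R) (n : nat) : S -> S -> R :=
  match n with
  | 0 => fun x y => (x == y)%:R
  | n.+1 => fun x y => \sum_z mpow Pi n x z * Pi z y
  end.

Definition stochastic (Pi : S -> S -> R) : Prop :=
  (forall x y, 0 <= Pi x y) /\ (forall x, \sum_y Pi x y = 1).

Definition irreducible (Pi : S -> S -> R) : Prop :=
  forall x y, exists n, 0 < mpow Pi n x y.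

Definition kappa (Pi : S -> S -> R) (x y : S) : R := Pi x y - (x == y)%:R.

Definition Kop (Pi : S -> S -> R) (g : S -> R) : S -> R :=
  fun x => \sum_y kappa Pi x y * g y.

Definition inM (P : S -> R) : Prop := (forall y, 0 < P y) /\ \sum_y P y = 1.

Definition grad (f : S -> R) (x y : S) : R := f y - f x.

Definition cw (Pi : S -> S -> R) (q : S -> R) (x y : S) : R :=
  2^-1 * kappa Pi x y * q x.

Definition L2norm (Pi : S -> S -> R) (q : S -> R) (F : S -> S -> R) : R :=
  Num.sqrt (\sum_x \sum_(y | 0 < kappa Pi x y) cw Pi q x y * F x y ^+ 2).

Definition Hm1norm (Pi : S -> S -> R) (q : S -> R) (f : S -> R) : \bar R :=
  match pselect (exists g, Kop Pi g = f) with
  | left H => (L2norm Pi q (grad (projT1 (cid H))))%:E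
  | right _ => +oo%E
  end.

Definition rho (Pi : S -> S -> R) (q : S -> R) (P1 P2 : S -> R) : \bar R :=
  Hm1norm Pi q (fun y => P1 y / q y - P2 y / q y).

Definition Var (q : S -> R) (P : S -> R) : R :=
  \sum_y q y * (P y / q y) ^+ 2 - 1.

Definition smooth_curve (t0 : R) (P : R -> S -> R) : Prop :=
  exists2 e : R, 0 < e &
    forall (y : S) (n : nat) (t : R), t0 - e < t ->
      derivable (iter n (@derive1 R R) (fun s => P s y)) t 1.

Definition curve_in_M (t0 : R) (P : R -> S -> R) : Prop :=
  forall t, t0 <= t -> inM (P t).

(* difference quotient (F(P(t0+h)) - F(P(t0))) / rho(P(t0+h), P(t0)), as an
   extended real (rho is finite on M x M; fine is used to divide) *)
Definition dquot (F : (S -> R) -> R) (rh : (S -> R) -> (S -> R) -> \bar R)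
    (t0 : R) (P : R -> S -> R) (h : R) : \bar R :=
  ((F (P (t0 + h)) - F (P t0)) / fine (rh (P (t0 + h)) (P t0)))%:E.

Definition steepest_descent (F : (S -> R) -> R)
    (rh : (S -> R) -> (S -> R) -> \bar R) (t0 : R) (P : R -> S -> R) : Prop :=
  curve_in_M t0 P /\ smooth_curve t0 P /\
  exists l : \bar R,
    dquot F rh t0 P h @[h --> 0^'+] --> l /\
    forall Pt : R -> S -> R,
      curve_in_M t0 Pt -> smooth_curve t0 Pt -> Pt t0 = P t0 ->
      forall lt : \bar R, dquot F rh t0 Pt h @[h --> 0^'+] --> lt ->
        (l <= lt)%E.

End Defs.

(* Main.v *)
Require Import Defs.
From HB Require Import structures.
From mathcomp Require Import all_boot all_order all_algebra.
From mathcomp Require Import all_classical all_reals all_analysis.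
From mathcomp Require Import ring lra.
Import Order.TTheory GRing.Theory Num.Theory.
Import numFieldNormedType.Exports.
Local Open Scope classical_set_scope.
Local Open Scope ring_scope.
Set Implicit Arguments. Unset Strict Implicit.

Section Alg.
Variables (R : realType) (S : finType) (Pi : S -> S -> R) (q : S -> R).
Hypothesis Hst : stochastic Pi.
Hypothesis Hq0 : forall y, 0 <= q y.
Hypothesis Hdb : forall y z, q y * kappa Pi y z = q z * kappa Pi z y.

Definition Dform (F G : S -> S -> R) : R :=
  \sum_x \sum_(y | 0 < kappa Pi x y) cw Pi q x y * F x y * G x y.

Lemma cw_ge0 x y : 0 < kappa Pi x y -> 0 <= cw Pi q x y.
Proof.
move=> k0; rewrite /cw mulr_ge0 // mulr_ge0 // ?invr_ge0 ?ler0n //.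
exact: ltW.
Qed.

Lemma DformC F G : Dform F G = Dform G F.
Proof.
by apply: eq_bigr => x _; apply: eq_bigr => y _; rewrite mulrAC.
Qed.

Lemma Dform_ge0 F : 0 <= Dform F F.
Proof.
apply: sumr_ge0 => x _; apply: sumr_ge0 => y k0.
by rewrite -mulrA mulr_ge0 ?cw_ge0 // -expr2 sqr_ge0.
Qed.

Lemma L2normE F : L2norm Pi q F = Num.sqrt (Dform F F).
Proof.
rewrite /L2norm /Dform; congr Num.sqrt.
by apply: eq_bigr => x _; apply: eq_bigr => y _; rewrite expr2 mulrA.
Qed.

Lemma kappa_sum x : \sum_y kappa Pi x y = 0.
Proof.
rewrite /kappa sumrB (proj2 Hst x).
rewrite (bigD1 x) //= eqxx big1 ?addr0 ?subrr // => y /negbTE.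
by rewrite eq_sym => ->.
Qed.

Lemma kappa_offdiag x y : x != y -> 0 <= kappa Pi x y.
Proof.
by move=> /negbTE xy; rewrite /kappa xy subr0 (proj1 Hst).
Qed.

Lemma Dform_full F G : (forall x, F x x = 0) ->
  Dform F G = \sum_x \sum_y cw Pi q x y * F x y * G x y.
Proof.
move=> F0; apply: eq_bigr => x _.
rewrite [RHS](bigID (fun y => 0 < kappa Pi x y)) /= [X in _ = _ + X]big1 ?addr0 //.
move=> y kn; have [<-|xy] := eqVneq x y; first by rewrite F0 mulr0 mul0r.
have : kappa Pi x y = 0.
  by apply/eqP; rewrite eq_le kappa_offdiag // andbT leNgt.
by rewrite /cw => ->; rewrite mulr0 !mul0r.
Qed.

Lemma IBP (phi g : S -> R) :
  \sum_x q x * phi x * Kop Pi g x = - Dform (grad phi) (grad g).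
Proof.
pose M x y := q x * kappa Pi x y.
pose T := \sum_x \sum_y M x y * phi x * (g y - g x).
have E0 : \sum_x q x * phi x * Kop Pi g x = T.
  apply: eq_bigr => x _; rewrite /Kop mulr_sumr.
  have -> : \sum_y M x y * phi x * (g y - g x) =
     \sum_y q x * phi x * (kappa Pi x y * g y) -
     q x * phi x * g x * \sum_y kappa Pi x y.
    rewrite mulr_sumr -sumrB; apply: eq_bigr => y _; rewrite /M; ring.
  by rewrite kappa_sum mulr0 subr0.
have E2 : \sum_x \sum_y M x y * phi y * (g y - g x) = - T.
  rewrite exchange_big /T -sumrN; apply: eq_bigr => x _.
  rewrite -sumrN; apply: eq_bigr => y _.
  rewrite /M Hdb; ring.
have E3 : Dform (grad phi) (grad g) =
   2^-1 * \sum_x \sum_y M x y * (phi y - phi x) * (g y - g x).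
  rewrite Dform_full; last by move=> x; rewrite /grad subrr.
  rewrite mulr_sumr; apply: eq_bigr => x _; rewrite mulr_sumr.
  apply: eq_bigr => y _; rewrite /cw /grad /M; ring.
have E4 : \sum_x \sum_y M x y * (phi y - phi x) * (g y - g x) =
   \sum_x \sum_y M x y * phi y * (g y - g x) - T.
  rewrite /T -sumrB; apply: eq_bigr => x _; rewrite -sumrB.
  by apply: eq_bigr => y _; ring.
rewrite E0 E3 E4 E2.
have -> : - T - T = 2 * (- T) by ring.
by rewrite mulrA mulVf ?pnatr_eq0 // mul1r opprK.
Qed.


Lemma Dform_quad F G t :
  Dform (fun x y => F x y + t * G x y) (fun x y => F x y + t * G x y) =
  Dform F F + 2 * t * Dform F G + t ^+ 2 * Dform G G.
Proof.
rewrite /Dform !mulr_sumr -!big_split; apply: eq_bigr => x _.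
rewrite !mulr_sumr -!big_split; apply: eq_bigr => y _ /=; ring.
Qed.

Lemma quad_disc (A B C : R) :
  (forall t, 0 <= A + 2 * t * C + t ^+ 2 * B) -> 0 <= B -> C ^+ 2 <= A * B.
Proof.
move=> H; rewrite le_eqVlt => /orP[/eqP B0|Bp].
  have C0 : C = 0.
    apply/eqP/negPn/negP => C0.
    have := H (- (A + 1) / (2 * C)); rewrite -B0 mulr0 addr0.
    have -> : A + 2 * (- (A + 1) / (2 * C)) * C = -1.
      by field.
    by move=> h; lra.
  by rewrite C0 -B0 expr0n mulr0.
have := H (- C / B).
have -> : A + 2 * (- C / B) * C + (- C / B) ^+ 2 * B = (A * B - C ^+ 2) / B.
  by field; rewrite gt_eqF.
by rewrite ler_pdivlMr // mul0r subr_ge0.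
Qed.

Lemma CS F G : Dform F G ^+ 2 <= Dform F F * Dform G G.
Proof.
apply: quad_disc; last exact: Dform_ge0.
by move=> t; rewrite -Dform_quad Dform_ge0.
Qed.

Lemma CS_abs F G :
  `|Dform F G| <= Num.sqrt (Dform F F) * Num.sqrt (Dform G G).
Proof.
rewrite -sqrtr_sqr -sqrtrM ?Dform_ge0 //; apply: ler_wsqrtr; exact: CS.
Qed.

Lemma Dform_deg F G : Dform F F = 0 -> Dform F G = 0.
Proof.
move=> F0; have := CS F G; rewrite F0 mul0r => h.
by apply/eqP; rewrite -sqrf_eq0 eq_le h sqr_ge0.
Qed.

Lemma Dform_uniq g1 g2 : Kop Pi g1 = Kop Pi g2 ->
  Dform (grad g1) (grad g1) = Dform (grad g2) (grad g2).
Proof.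
move=> E.
have h1 : Dform (grad g1) (grad g1) = Dform (grad g1) (grad g2).
  apply: oppr_inj; rewrite -!IBP; by rewrite E.
have h2 : Dform (grad g2) (grad g2) = Dform (grad g2) (grad g1).
  apply: oppr_inj; rewrite -!IBP; by rewrite E.
by rewrite h1 h2 DformC.
Qed.

Lemma Hm1normE g f : Kop Pi g = f ->
  Hm1norm Pi q f = (Num.sqrt (Dform (grad g) (grad g)))%:E.
Proof.
move=> Hg; rewrite /Hm1norm; case: pselect => [H|H]; last first.
  by exfalso; apply: H; exists g.
move: (projT2 (cid H)); set g' := projT1 (cid H) => Hg'.
by rewrite L2normE (@Dform_uniq g' g) // Hg' Hg.
Qed.

Lemma Hm1norm_oo f : ~ (exists g, Kop Pi g = f) -> Hm1norm Pi q f = +oo%E.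
Proof. by move=> H; rewrite /Hm1norm; case: pselect. Qed.

Lemma Var_diff (P1 P0 : S -> R) :
  Var q P1 - Var q P0 =
  2 * \sum_y q y * (P0 y / q y) * (P1 y / q y - P0 y / q y) +
  \sum_y q y * (P1 y / q y - P0 y / q y) * (P1 y / q y - P0 y / q y).
Proof.
rewrite /Var mulr_sumr -big_split /=.
have -> : forall a b : R, (a - 1) - (b - 1) = a - b by move=> a b; ring.
rewrite -sumrB; apply: eq_bigr => y _; ring.
Qed.

Lemma lower_bound (P1 P0 : S -> R) :
  -2 * Num.sqrt (Dform (grad (fun y => P0 y / q y)) (grad (fun y => P0 y / q y)))
  <= (Var q P1 - Var q P0) / fine (rho Pi q P1 P0).
Proof.
set l0 := (fun y => P0 y / q y).
set N0 := Num.sqrt _.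
have N0ge : 0 <= N0 by exact: sqrtr_ge0.
rewrite /rho; set d := (fun y => P1 y / q y - P0 y / q y).
case: (pselect (exists g, Kop Pi g = d)) => [[g Hg]|Hn]; last first.
  rewrite Hm1norm_oo //= invr0 mulr0; lra.
rewrite (@Hm1normE g d Hg) /=.
set r := Num.sqrt _.
have rge : 0 <= r by exact: sqrtr_ge0.
rewrite Var_diff.
have E1 : \sum_y q y * (P0 y / q y) * (P1 y / q y - P0 y / q y) =
    - Dform (grad l0) (grad g).
  by rewrite -IBP; apply: eq_bigr => y _; rewrite Hg.
have E2 : 0 <= \sum_y q y * (P1 y / q y - P0 y / q y) * (P1 y / q y - P0 y / q y).
  by apply: sumr_ge0 => y _; rewrite -mulrA mulr_ge0 // -expr2 sqr_ge0.
rewrite E1.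
have hD : Dform (grad l0) (grad g) <= N0 * r.
  exact: le_trans (ler_norm _) (CS_abs _ _).
move: rge; rewrite le_eqVlt => /orP[/eqP <-|rp].
  rewrite invr0 mulr0; lra.
rewrite ler_pdivlMr //; nra.
Qed.

End Alg.
Set Implicit Arguments. Unset Strict Implicit.

Section Ana.
Variable R : realType.

Lemma deriv_quot (f : R -> R) (x d : R) : is_derive x 1 f d ->
  (fun h => h^-1 * (f (h + x) - f x)) @ 0^'+ --> d.
Proof.
move=> H; have := @ex_derive _ _ _ _ _ _ _ H; rewrite /derivable.
have E : 'D_1 f x = d := @derive_val _ _ _ _ _ _ _ H.
rewrite /derive in E; rewrite E => /cvg_dnbhs_at_right.
move=> K; apply: cvg_trans K; apply: near_eq_cvg; apply: nearW => h /=.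
by rewrite /shift /= [h%:A]mulr1.
Qed.


Lemma is_derive_cont (f : R -> R) (x d : R) : is_derive x 1 f d -> {for x, continuous f}.
Proof.
move=> H; apply: differentiable_continuous; apply/derivable1_diffP.
exact: (@ex_derive _ _ _ _ _ _ _ H).
Qed.
Arguments is_derive_cont [f x d].

Lemma right_cont (f : R -> R) (x d : R) : is_derive x 1 f d ->
  (fun h => f (h + x)) @ 0^'+ --> f x.
Proof.
move=> H; have c := is_derive_cont H.
have h1 : (fun h => h + x) @ 0^'+ --> x.
  apply: cvg_at_right_filter; rewrite -[X in _ --> X](add0r x).
  apply: cvgD; [exact: cvg_id | exact: cvg_cst].
exact: (cvg_comp _ _ h1 c).
Qed.

Lemma mono_on (f f' : R -> R) (a : R) :
  (forall x, a < x -> is_derive x 1 f (f' x)) ->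
  (forall x, a < x -> 0 <= f' x) ->
  forall x y, a < x -> x <= y -> f x <= f y.
Proof.
move=> Hd Hp x y ax xy.
apply: (@ger0_derive1_ndecr R f x y) => //.
- move=> z; rewrite in_itv /= => /andP[xz _].
  exact: (@ex_derive _ _ _ _ _ _ _ (Hd z (lt_trans ax xz))).
- move=> z; rewrite in_itv /= => /andP[xz _].
  rewrite derive1E (@derive_val _ _ _ _ _ _ _ (Hd z (lt_trans ax xz))).
  exact: Hp (lt_trans ax xz).
- apply: continuous_in_subspaceT => z; rewrite inE /= in_itv /= => /andP[xz _].
  exact: is_derive_cont (Hd z (lt_le_trans ax xz)).
Qed.
Arguments mono_on [f f' a].

Lemma cst_on (f : R -> R) (a : R) :
  (forall x, a < x -> is_derive x 1 f 0) ->
  forall x y, a < x -> a < y -> f x = f y.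
Proof.
move=> Hd.
have H1 : forall x y, a < x -> x <= y -> f x <= f y.
  by apply: (@mono_on f (fun=> 0) a) => // x _.
have H2 : forall x y, a < x -> x <= y -> - f x <= - f y.
  apply: (@mono_on (- f) (fun=> 0) a) => // x ax.
  rewrite -oppr0; exact: is_deriveN (Hd x ax).
move=> x y ax ay; have [xy|yx] := leP x y.
  by apply/eqP; rewrite eq_le H1 //= -lerN2 H2.
by apply/eqP; rewrite eq_le -lerN2 H2 ?(ltW yx) //= H1 // ltW.
Qed.

Lemma lim_le (f f' : R -> R) (a L : R) :
  (forall x, a < x -> is_derive x 1 f (f' x)) ->
  (forall x, a < x -> 0 <= f' x) ->
  f t @[t --> a^'+] --> L ->
  forall x, a < x -> L <= f x.
Proof.
move=> Hd Hp HL x ax; rewrite leNgt; apply/negP => fxL.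
have M := mono_on Hd Hp.
near a^'+ => t.
have h1 : f x < f t by near: t; exact: (cvgr_gt L HL).
have h2 : a < t by near: t; exact: nbhs_right_gt.
have h3 : t < x by near: t; exact: nbhs_right_lt.
have := M t x h2 (ltW h3); rewrite leNgt h1 //.
Unshelve. all: by end_near.
Qed.


Definition negp (x : R) := if x < 0 then x else 0.

Lemma negp_le0 x : negp x <= 0.
Proof. by rewrite /negp; case: ltP => // /ltW. Qed.

Lemma negp_le x : negp x <= x.
Proof. by rewrite /negp; case: ltP. Qed.

Lemma negp_mul x : negp x * x = negp x ^+ 2.
Proof. by rewrite /negp; case: ltP => _; rewrite ?expr2 ?mul0r ?mulr0. Qed.

Lemma negp0 x : 0 <= x -> negp x = 0.
Proof. by rewrite /negp; case: ltP => // h1 h2; exfalso; lra. Qed.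

Lemma negsq_quot (x : R) :
  (fun h => h^-1 *: (((fun y => negp y ^+ 2) \o shift x) (h *: 1) - negp x ^+ 2)) @ 0^' --> 2 * negp x.
Proof.
set g := fun y => negp y ^+ 2.
have key : forall h, `|g (h + x) - g x - 2 * negp x * h| <= h ^+ 2.
  move=> h; rewrite /g /negp.
  case: (ltP x 0) => ?; case: (ltP (h + x) 0) => ?;
    rewrite ler_norml; apply/andP; split; nra.
apply/cvgrPdist_le => eps ep.
near=> h.
have hn : h != 0 by near: h; exact: nbhs_dnbhs_neq.
have hl : `|h| <= eps by near: h; exact: dnbhs0_le.
rewrite /= /shift /= [h%:A]mulr1.
have -> : 2 * negp x - h^-1 * (g (h + x) - g x) =
   - (h^-1 * (g (h + x) - g x - 2 * negp x * h)) by field.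
rewrite normrN normrM normrV ?unitfE //.
rewrite ler_pdivrMl ?normr_gt0 //.
apply: (le_trans (key h)).
by rewrite -[h ^+ 2]real_normK ?num_real // expr2 ler_wpM2l.
Unshelve. all: by end_near.
Qed.

Lemma negsq_derive (x : R) : is_derive x 1 (fun y => negp y ^+ 2) (2 * negp x).
Proof.
have Q := @negsq_quot x.
have D : derivable (fun y => negp y ^+ 2) x 1 by exact: cvgP Q.
by constructor => //; rewrite /derive (cvg_lim _ Q).
Qed.


Lemma is_derive_ext (f g : R -> R) (x d d' : R) :
  f = g -> d = d' -> is_derive x 1 f d -> is_derive x 1 g d'.
Proof. by move=> -> ->. Qed.

Lemma is_derive_sumS (I : Type) (r : seq I) (F : I -> R -> R) (dF : I -> R) (t : R) :
  (forall i, is_derive t 1 (F i) (dF i)) ->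
  is_derive t 1 (fun s => \sum_(i <- r) F i s) (\sum_(i <- r) dF i).
Proof.
move=> H; elim: r => [|a r IH].
  apply: (@is_derive_ext (cst 0) _ t 0 _ _ _ (is_derive_cst (0:R) t (1:R))).
    by apply/funext => s; rewrite big_nil.
  by rewrite big_nil.
apply: (@is_derive_ext (F a + (fun s => \sum_(i <- r) F i s)) _ t (dF a + \sum_(i <- r) dF i) _ _ _ (is_deriveD (H a) IH)).
  by apply/funext => s; rewrite big_cons.
by rewrite big_cons.
Qed.

Lemma cvg_sumS (T : Type) (F : set_system T) (FF : Filter F) (I : Type) (r : seq I)
    (f : I -> T -> R) (a : I -> R) :
  (forall i, f i t @[t --> F] --> a i) ->
  (\sum_(i <- r) f i t) @[t --> F] --> \sum_(i <- r) a i.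
Proof.
move=> H; elim: r => [|b r IH].
  rewrite big_nil; under eq_fun do rewrite big_nil; exact: cvg_cst.
rewrite big_cons; under eq_fun do rewrite big_cons; exact: cvgD.
Qed.

Lemma cvg_sumSP (T : Type) (F : set_system T) (FF : Filter F) (I : Type) (r : seq I)
    (P : pred I) (f : I -> T -> R) (a : I -> R) :
  (forall i, P i -> f i t @[t --> F] --> a i) ->
  (\sum_(i <- r | P i) f i t) @[t --> F] --> \sum_(i <- r | P i) a i.
Proof.
move=> H; elim: r => [|b r IH].
  rewrite big_nil; under eq_fun do rewrite big_nil; exact: cvg_cst.
rewrite big_cons; under eq_fun do rewrite big_cons.
case Pb : (P b) => //; exact: cvgD (H b Pb) IH.
Qed.

Lemma derive_near (f g : R -> R) (x d : R) :
  (forall s, 0 < s -> f s = g s) -> 0 < x -> is_derive x 1 g d -> is_derive x 1 f d.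
Proof.
move=> E x0 H.
have Q : (fun h => h^-1 *: ((f \o shift x) (h *: 1) - f x)) @ 0^' --> d.
  have := @ex_derive _ _ _ _ _ _ _ H; rewrite /derivable.
  have Ed : 'D_1 g x = d := @derive_val _ _ _ _ _ _ _ H.
  rewrite /derive in Ed; rewrite Ed => K; apply: cvg_trans K.
  apply: near_eq_cvg; near=> h.
  have hl : `|h| < x by near: h; exact: dnbhs0_lt.
  have hx : 0 < h + x by move: hl; rewrite ltr_norml => /andP[h1 _]; lra.
  by rewrite /= /shift /= [h%:A]mulr1 !E.
have D : derivable f x 1 by exact: cvgP Q.
by constructor => //; rewrite /derive (cvg_lim _ Q).
Unshelve. all: by end_near.
Qed.

End Ana.
Arguments is_derive_ext {R f g x d d'}.
Unset Implicit Arguments. Set Strict Implicit.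

Section Curve.
Variables (R : realType) (S : finType) (Pi : S -> S -> R) (q : S -> R) (p : R -> S -> R).
Hypothesis Hst : stochastic Pi.
Hypothesis Hirr : irreducible Pi.
Hypothesis Hq0 : forall y, 0 <= q y.
Hypothesis Hq1 : \sum_y q y = 1.
Hypothesis Hstat : forall y, \sum_x q x * Pi x y = q y.
Hypothesis Hdb : forall y z, q y * kappa Pi y z = q z * kappa Pi z y.
Hypothesis Hp0 : inM (p 0).
Hypothesis Hlim0 : forall y : S, p t y @[t --> (0 : R)^'+] --> p 0 y.
Hypothesis Hder : forall t : R, 0 < t -> forall y : S,
      is_derive t 1 (fun s => p s y) (\sum_z p t z * kappa Pi z y).

Lemma mpow_ge0 n x y : 0 <= mpow Pi n x y.
Proof.
elim: n x y => [|n IH] x y /=; first exact: ler0n.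
by apply: sumr_ge0 => z _; rewrite mulr_ge0 // (proj1 Hst).
Qed.

Lemma zero_prop n : forall x y, q y = 0 -> 0 < mpow Pi n x y -> q x = 0.
Proof.
elim: n => [|n IH] x y qy /=.
  by case: eqP => [->|]; rewrite ?ltxx.
move=> hs.
have [z hz] : exists z, 0 < mpow Pi n x z * Pi z y.
  apply/not_existsP => hn; move: hs; rewrite ltNge => /negP; apply.
  by apply: sumr_le0 => z _; rewrite leNgt; apply/negP => h; apply: (hn z).
have Pz : 0 < Pi z y.
  rewrite lt0r (proj1 Hst) andbT; apply/eqP => h0.
  by move: hz; rewrite h0 mulr0 ltxx.
have Mz : 0 < mpow Pi n x z.
  rewrite lt0r mpow_ge0 andbT; apply/eqP => h0.
  by move: hz; rewrite h0 mul0r ltxx.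
apply: (IH x z) => //.
have := Hstat y; rewrite qy => hsum.
have := psumr_eq0P (fun i _ => mulr_ge0 (Hq0 i) (proj1 Hst i y)) hsum.
by move=> /(_ z isT) /eqP; rewrite mulf_eq0 (gt_eqF Pz) orbF => /eqP.
Qed.

Lemma q_pos y : 0 < q y.
Proof.
rewrite lt0r Hq0 andbT; apply/eqP => qy.
have all0 : forall x, q x = 0.
  move=> x; have [n hn] := Hirr x y; exact: zero_prop hn.
by move: Hq1; rewrite big1 // => /esym/eqP; rewrite oner_eq0.
Qed.

Definition ell (t : R) (y : S) : R := p t y / q y.

Lemma ell_derive (t : R) : 0 < t -> forall y,
  is_derive t 1 (fun s => ell s y) (Kop Pi (ell t) y).
Proof.
move=> t0 y.
have h := is_deriveZ (q y)^-1 (Hder t t0 y).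

apply: (is_derive_ext _ _ h).
  by apply/funext => s; rewrite /ell /= mulrC.
change ((q y)^-1 * (\sum_z p t z * kappa Pi z y) = Kop Pi (ell t) y).
rewrite /Kop /ell /= mulr_sumr; apply: eq_bigr => z _.
have qz := q_pos z; have qy := q_pos y.
have := Hdb z y => hdb.
apply: (@mulfI _ (q y * q z)); first by rewrite mulf_neq0 ?gt_eqF.

have -> : q y * q z * ((q y)^-1 * (p t z * kappa Pi z y)) = q z * (p t z * kappa Pi z y).
  by field; rewrite gt_eqF.
have -> : q y * q z * (kappa Pi y z * (p t z / q z)) = q y * kappa Pi y z * p t z.
  by field; rewrite gt_eqF.
by rewrite Hdb; ring.
Qed.


Lemma Pi_le1 z y : Pi z y <= 1.
Proof.
rewrite -(proj2 Hst z) (bigD1 y) //= lerDl.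
by apply: sumr_ge0 => w _; exact: (proj1 Hst).
Qed.

Lemma sum_kappa_col (f : S -> R) y :
  \sum_z f z * kappa Pi z y = \sum_z f z * Pi z y - f y.
Proof.
rewrite /kappa.
have -> : \sum_z f z * (Pi z y - (z == y)%:R) = \sum_z f z * Pi z y - \sum_z f z * (z == y)%:R.
  by rewrite -sumrB; apply: eq_bigr => z _; ring.
congr (_ - _); rewrite (bigD1 y) //= eqxx mulr1 big1 ?addr0 // => z /negbTE ->.
by rewrite mulr0.
Qed.

Definition Nneg (t : R) := \sum_y negp (p t y) ^+ 2.
Definition Nneg' (t : R) := \sum_y 2 * negp (p t y) * (\sum_z p t z * kappa Pi z y).

Lemma Nneg_derive (t : R) : 0 < t -> is_derive t 1 Nneg (Nneg' t).
Proof.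
move=> t0; apply: (is_derive_ext _ _ (@is_derive_sumS R S (index_enum S)
   (fun y s => negp (p s y) ^+ 2)
   (fun y => 2 * negp (p t y) * (\sum_z p t z * kappa Pi z y)) t _)) => //.
move=> y.
have h := is_derive1_comp (negsq_derive (p t y)) (Hder t t0 y).
by apply: (is_derive_ext _ _ h).
Qed.

Lemma Nneg_ge0 (t : R) : 0 <= Nneg t.
Proof. by apply: sumr_ge0 => y _; exact: sqr_ge0. Qed.

Definition CC : R := 4 * #|S|%:R.

Lemma Nneg'_le (t : R) : Nneg' t <= CC * Nneg t.
Proof.
rewrite /Nneg' /Nneg.
set n := fun y => negp (p t y).
have step : forall y, 2 * n y * (\sum_z p t z * kappa Pi z y) <=
    2 * \sum_z (n y ^+ 2 + n z ^+ 2).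
  move=> y; rewrite sum_kappa_col.
  have ny := negp_le0 (p t y).
  have h1 : n y * (\sum_z p t z * Pi z y) <= n y * (\sum_z n z * Pi z y).
    apply: ler_wnM2l => //; apply: ler_sum => z _.
    by apply: ler_wpM2r; [exact: (proj1 Hst) | exact: negp_le].
  have h2 : n y * p t y = n y ^+ 2 by rewrite /n negp_mul.
  have h3 : n y * (\sum_z n z * Pi z y) <= \sum_z (n y ^+ 2 + n z ^+ 2).
    rewrite mulr_sumr; apply: ler_sum => z _.
    have nz := negp_le0 (p t z); have P0 := proj1 Hst z y; have P1 := Pi_le1 z y.
    rewrite /n in ny nz *.
    set a := negp (p t y) in ny *; set b := negp (p t z) in nz *.
    have ab : 0 <= a * b by rewrite mulr_le0.
    have P1' : 0 <= 1 - Pi z y by rewrite subr_ge0.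
    have := mulr_ge0 ab P1'; have := sqr_ge0 (a - b); nra.
  have h4 : 0 <= n y ^+ 2 by exact: sqr_ge0.
  have E : 2 * n y * (\sum_z p t z * Pi z y - p t y) =
    2 * (n y * (\sum_z p t z * Pi z y)) - 2 * (n y * p t y) by ring.
  rewrite E h2; lra.
apply: le_trans (ler_sum _ (fun y _ => step y)) _.
rewrite -mulr_sumr.
have -> : \sum_y \sum_z (n y ^+ 2 + n z ^+ 2) =
   \sum_y (n y ^+ 2 * #|S|%:R) + \sum_(y : S) \sum_z n z ^+ 2.
  rewrite -big_split; apply: eq_bigr => y _ /=.
  by rewrite big_split /= sumr_const mulr_natr.
rewrite -mulr_suml sumr_const -mulr_natr /CC /n.
set NN := \sum_i _; set c := (#|S|%:R : R).
suff : 0 <= NN * c by move=> ?; nra.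
by rewrite mulr_ge0 // /NN; apply: sumr_ge0 => y _; exact: sqr_ge0.
Qed.


Lemma E_derive (s : R) :
  is_derive s 1 (fun s => expR (CC * - s)) (expR (CC * - s) * (CC * -1)).
Proof.
have h := @is_derive1_comp R expR (CC \*: -%R) s _ _ (is_derive_expR _) (is_deriveZ CC (is_deriveNid s 1)).
by apply: (is_derive_ext _ _ h).
Qed.

Lemma negp_cont0 y : (fun t => negp (p t y) ^+ 2) @ 0^'+ --> 0.
Proof.
have c := is_derive_cont (negsq_derive (p 0 y)).
have := cvg_comp _ _ (Hlim0 y) c.
by rewrite /= negp0 ?expr0n //= ltW // (proj1 Hp0 y).
Qed.

Lemma p_nonneg (t : R) : 0 < t -> forall y, 0 <= p t y.
Proof.
move=> t0.
pose f := fun s => - expR (CC * - s) * Nneg s.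
pose f' := fun s => expR (CC * - s) * (CC * Nneg s - Nneg' s).
have df : forall s : R, 0 < s -> is_derive s 1 f (f' s).
  move=> s s0; have h := is_deriveM (is_deriveN (E_derive s)) (Nneg_derive s s0).
  move: h; rewrite -![_ *: _]/(_ * _) => h.
  apply: (is_derive_ext _ _ h) => //; rewrite /f' /=.
  change ((- (fun s1 : R => expR (CC * - s1))) s) with (- expR (CC * - s)); ring.
have f'0 : forall s : R, 0 < s -> 0 <= f' s.
  by move=> s _; rewrite mulr_ge0 ?expR_ge0 // subr_ge0 Nneg'_le.
have fl : f s @[s --> 0^'+] --> 0.
  suff : f s @[s --> 0^'+] --> - expR (CC * - 0) * 0 by rewrite mulr0.
  apply: cvgM; first apply: cvgN.
    have := is_derive_cont (E_derive 0); move/cvg_at_right_filter.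
    by [].

  have H := cvg_sumS _ (r := index_enum S) (fun y => negp_cont0 y).
  by move: H; rewrite big1 // => H; exact: H.
have h0 := lim_le df f'0 fl t0.
have N0 : Nneg t = 0.
  apply/eqP; rewrite eq_le Nneg_ge0 andbT.
  have := expR_gt0 (CC * - t); move: h0; rewrite /f; nra.
move=> y; have := psumr_eq0P (fun y _ => sqr_ge0 (negp (p t y))) N0.
move=> /(_ y isT) /eqP; rewrite sqrf_eq0 /negp; case: ltP => // h /eqP h'.
by move: h; rewrite h' ltxx.
Qed.


Lemma p_pos (t : R) : 0 < t -> forall y, 0 < p t y.
Proof.
move=> t0 y.
pose f := fun s => expR s * p s y.
pose f' := fun s => expR s * (\sum_z p s z * Pi z y).
have df : forall s : R, 0 < s -> is_derive s 1 f (f' s).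
  move=> s s0; have h := is_deriveM (is_derive_expR s) (Hder s s0 y).
  move: h; rewrite -![_ *: _]/(_ * _) => h.
  apply: (is_derive_ext _ _ h) => //; rewrite /f' sum_kappa_col; ring.
have f'0 : forall s : R, 0 < s -> 0 <= f' s.
  move=> s s0; rewrite mulr_ge0 ?expR_ge0 //; apply: sumr_ge0 => z _.
  by rewrite mulr_ge0 ?(proj1 Hst) ?p_nonneg.
have fl : f s @[s --> 0^'+] --> expR 0 * p 0 y.
  apply: cvgM; last exact: Hlim0.
  exact: cvg_at_right_filter (is_derive_cont (is_derive_expR 0)).
have := lim_le df f'0 fl t0; rewrite expR0 mul1r /f.
have := proj1 Hp0 y; have := expR_gt0 t; nra.
Qed.

Lemma p_sum (t : R) : 0 < t -> \sum_y p t y = 1.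
Proof.
move=> t0.
pose f := fun s => \sum_y p s y.
have df : forall s : R, 0 < s -> is_derive s 1 f 0.
  move=> s s0.
  have h := @is_derive_sumS R S (index_enum S) (fun y s => p s y)
     (fun y => \sum_z p s z * kappa Pi z y) s (fun y => Hder s s0 y).
  apply: (is_derive_ext _ _ h) => //.
  rewrite exchange_big /= big1 // => z _; by rewrite -mulr_sumr kappa_sum // mulr0.
have fl : f s @[s --> 0^'+] --> (1 : R).
  rewrite -(proj2 Hp0); exact: cvg_sumS _ (fun y => Hlim0 y).
have h1 := lim_le df (fun _ _ => lexx 0) fl t0.
have dfN : forall s : R, 0 < s -> is_derive s 1 (- f) (- 0).
  by move=> s s0; apply: is_deriveN; exact: df.
have flN : (- f) s @[s --> 0^'+] --> (- 1 : R) by exact: cvgN.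
have h2 := lim_le dfN (fun _ _ => (ltac:(by rewrite oppr0) : 0 <= - (0:R))) flN t0.
by apply/eqP; rewrite eq_le h1 andbT -lerN2.
Qed.

Fixpoint kn (n : nat) (z y : S) : R :=
  match n with
  | 0 => (z == y)%:R
  | n'.+1 => \sum_w kappa Pi z w * kn n' w y
  end.

Lemma Hn_derive n y (t : R) : 0 < t ->
  is_derive t 1 (fun s => \sum_z p s z * kn n z y) (\sum_z p t z * kn n.+1 z y).
Proof.
move=> t0.
have h := @is_derive_sumS R S (index_enum S) (fun z s => p s z * kn n z y)
   (fun z => kn n z y * \sum_w p t w * kappa Pi w z) t _.
apply: (is_derive_ext _ _ (h _)) => //.
  rewrite /= (eq_bigr (fun z => \sum_w kn n z y * (p t w * kappa Pi w z)));
    last by move=> z _; rewrite mulr_sumr.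
  rewrite exchange_big /=; apply: eq_bigr => w _; rewrite mulr_sumr.
  by apply: eq_bigr => z _; ring.
move=> z; have h2 := is_deriveZ (kn n z y) (Hder t t0 z).
apply: (is_derive_ext _ _ h2) => //.
by apply/funext => s /=; rewrite mulrC.
Qed.

Lemma iter_eq n y (t : R) : 0 < t ->
  iter n (@derive1 R R) (fun s => p s y) t = \sum_z p t z * kn n z y.
Proof.
elim: n t => [|n IH] t t0 /=.
  rewrite (bigD1 y) //= eqxx mulr1 big1 ?addr0 // => z /negbTE ->.
  by rewrite mulr0.
rewrite derive1E.
have h := derive_near (fun s s0 => IH s s0) t0 (Hn_derive n y t t0).
exact: (@derive_val _ _ _ _ _ _ _ h).
Qed.

Lemma smooth (t0 : R) : 0 < t0 -> smooth_curve t0 p.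
Proof.
move=> t0p; exists t0 => // y n t; rewrite subrr => tp.
have h := derive_near (fun s s0 => iter_eq n y s s0) tp (Hn_derive n y t tp).
exact: (@ex_derive _ _ _ _ _ _ _ h).
Qed.

End Curve.

Definition ell_def := ell.
Definition ell_derive_def := ell_derive.

Section Gen.
Variables (R : realType) (S : finType) (Pi : S -> S -> R) (q : S -> R).

Lemma Dform_cvg (T : Type) (F : set_system T) (FF : Filter F)
   (Fh Gh : T -> S -> S -> R) (F0 G0 : S -> S -> R) :
  (forall x y, Fh t x y @[t --> F] --> F0 x y) ->
  (forall x y, Gh t x y @[t --> F] --> G0 x y) ->
  Dform Pi q (Fh t) (Gh t) @[t --> F] --> Dform Pi q F0 G0.
Proof.
move=> HF HG; rewrite /Dform.
apply: cvg_sumS => x; apply: cvg_sumSP => y _.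
by apply: cvgM; [apply: cvgM; [exact: cvg_cst | exact: HF] | exact: HG].
Qed.

Lemma Dform_scal_r F G (c : R) :
  Dform Pi q F (fun x y => c * G x y) = c * Dform Pi q F G.
Proof.
rewrite /Dform mulr_sumr; apply: eq_bigr => x _; rewrite mulr_sumr.
by apply: eq_bigr => y _; ring.
Qed.

Lemma Dform_scal F G (c : R) :
  Dform Pi q (fun x y => c * F x y) G = c * Dform Pi q F G.
Proof.
rewrite /Dform mulr_sumr; apply: eq_bigr => x _; rewrite mulr_sumr.
by apply: eq_bigr => y _; ring.
Qed.

Lemma Dform_zero G : Dform Pi q (fun _ _ => 0) G = 0.
Proof.
by rewrite /Dform big1 // => x _; rewrite big1 // => y _; rewrite mulr0 mul0r.
Qed.

End Gen.

Section Main.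
Variables (R : realType) (S : finType) (Pi : S -> S -> R) (q : S -> R) (p : R -> S -> R).
Hypothesis Hst : stochastic Pi.
Hypothesis Hirr : irreducible Pi.
Hypothesis Hq0 : forall y, 0 <= q y.
Hypothesis Hq1 : \sum_y q y = 1.
Hypothesis Hstat : forall y, \sum_x q x * Pi x y = q y.
Hypothesis Hdb : forall y z, q y * kappa Pi y z = q z * kappa Pi z y.
Hypothesis Hp0 : inM (p 0).
Hypothesis Hlim0 : forall y : S, p t y @[t --> (0 : R)^'+] --> p 0 y.
Hypothesis Hder : forall t : R, 0 < t -> forall y : S,
      is_derive t 1 (fun s => p s y) (\sum_z p t z * kappa Pi z y).
Variable t0 : R.
Hypothesis t0p : 0 < t0.

Let ell := @ell_def R S q p.
Let ell_derive {t : R} (tp : 0 < t) y : is_derive t 1 (fun s => ell s y) (Kop Pi (ell t) y) :=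
  @ell_derive_def R S Pi q p Hst Hirr Hq0 Hq1 Hstat Hdb Hder t tp y.

Lemma ltrDl_1 (x : R) : x < x + 1. Proof. by rewrite ltrDl. Qed.
Definition a0 : R := t0 / 2.
Lemma a0p : 0 < a0. Proof. by rewrite /a0 divr_gt0. Qed.
Lemma a0t0 : a0 < t0. Proof. by rewrite /a0 ltr_pdivrMr // mulr_natr mulr2n ltrDl. Qed.

Definition PI (y : S) (x : R) : R :=
  (\int[lebesgue_measure]_(s in `[a0, x]) ell s y)%R.

Lemma PI_derive y (x : R) : a0 < x -> is_derive x 1 (PI y) (ell x y).
Proof.
move=> ax.
have cont : forall z : R, a0 <= z -> {for z, continuous (fun s => ell s y)}.
  move=> z az; have zp : 0 < z := lt_le_trans a0p az.
  exact: is_derive_cont (ell_derive zp y).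
have int : lebesgue_measure.-integrable `[a0, x + 1] (EFin \o (fun s => ell s y)).
  apply: continuous_compact_integrable; first exact: segment_compact.
  apply: continuous_in_subspaceT => z; rewrite inE /= in_itv /= => /andP[az _].
  exact: cont.
have [D E] := @continuous_FTC1_closed R (fun s => ell s y) a0 x (x + 1) (ltrDl_1 x) int ax (cont x (ltW ax)).
have := derivableP D; rewrite -derive1E E => h.
exact: h.
Qed.


Lemma Kop_lin (f g : S -> R) :
  Kop Pi (fun z => f z - g z) = (fun w => Kop Pi f w - Kop Pi g w).
Proof.
apply/funext => w; rewrite /Kop -sumrB; apply: eq_bigr => z _; ring.
Qed.

Lemma Kconst w (x y : R) : a0 < x -> a0 < y ->
  Kop Pi (fun z => PI z x) w - ell x w = Kop Pi (fun z => PI z y) w - ell y w.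
Proof.
apply: (cst_on (f := fun s => Kop Pi (fun z => PI z s) w - ell s w)) => s s0.
have sp : 0 < s := lt_trans a0p s0.
have h1 := @is_derive_sumS R S (index_enum S) (fun z s => kappa Pi w z * PI z s)
   (fun z => kappa Pi w z * ell s z) s
   (fun z => is_deriveZ (kappa Pi w z) (PI_derive z s s0)).
have h2 := is_deriveD h1 (is_deriveN (ell_derive sp w)).
apply: (is_derive_ext _ _ h2) => //.
by rewrite /Kop subrr.
Qed.

Definition gh (h : R) (z : S) : R := PI z (t0 + h) - PI z t0.

Lemma Kgh (h : R) : 0 < h -> Kop Pi (gh h) = (fun w => ell (t0 + h) w - ell t0 w).
Proof.
move=> hp; rewrite /gh Kop_lin; apply/funext => w.
have := Kconst w (t0 + h) t0 _ a0t0.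
have -> : a0 < t0 + h by apply: lt_trans a0t0 _; rewrite ltrDl.
move=> /(_ isT) E.
have : Kop Pi (fun z => PI z (t0 + h)) w - Kop Pi (fun z => PI z t0) w
  = ell (t0 + h) w - ell t0 w by move: E; lra.
by [].
Qed.


Let D := Dform Pi q.
Let l0 := ell t0.
Let N0 := Num.sqrt (D (grad l0) (grad l0)).
Let dh (h : R) := fun w => ell (t0 + h) w - ell t0 w.
Let rr (h : R) := Num.sqrt (D (grad (gh h)) (grad (gh h))).
Let Q (h : R) := (Var q (p (t0 + h)) - Var q (p t0)) / fine (rho Pi q (p (t0 + h)) (p t0)).

Lemma Q_decomp (h : R) : 0 < h ->
  Q h = -2 * D (grad l0) (grad (gh h)) / rr h + (- D (grad (dh h)) (grad (gh h))) / rr h.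
Proof.
move=> hp; rewrite /Q /rho (Hm1normE Hst Hdb (Kgh h hp)) /= Var_diff.
have E1 : \sum_y q y * (p t0 y / q y) * (p (t0 + h) y / q y - p t0 y / q y)
    = - D (grad l0) (grad (gh h)).
  by rewrite -(IBP Hst Hdb) (Kgh h hp).
have E2 : \sum_y q y * (p (t0 + h) y / q y - p t0 y / q y) *
    (p (t0 + h) y / q y - p t0 y / q y) = - D (grad (dh h)) (grad (gh h)).
  by rewrite -(IBP Hst Hdb) (Kgh h hp).
rewrite E1 E2 -/(rr h); rewrite -mulrDl; congr (_ / _); ring.
Qed.

Lemma Y_bound (h : R) :
  `|(- D (grad (dh h)) (grad (gh h))) / rr h| <= Num.sqrt (D (grad (dh h)) (grad (dh h))).
Proof.
have rge : 0 <= rr h by exact: sqrtr_ge0.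
move: rge; rewrite le_eqVlt => /orP[/eqP <-|rp].
  by rewrite invr0 mulr0 normr0 sqrtr_ge0.
rewrite normrM normrN ger0_norm ?invr_ge0 ?(ltW rp) //.
rewrite ler_pdivrMr //; exact: (CS_abs Pi Hq0).
Qed.

Lemma dh_lim z : dh h z @[h --> 0^'+] --> 0.
Proof.
have c := right_cont (ell_derive t0p z).
have c' : ell (t0 + h) z @[h --> 0^'+] --> ell t0 z.
  have -> : (fun h => ell (t0 + h) z) = (fun h => ell (h + t0) z).
    by apply/funext => h; rewrite addrC.
  exact: c.
suff : dh h z @[h --> 0^'+] --> ell t0 z - ell t0 z by rewrite subrr.
exact: cvgB c' (cvg_cst _).
Qed.

Lemma Y_lim : (- D (grad (dh h)) (grad (gh h))) / rr h @[h --> 0^'+] --> 0.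
Proof.
have S0 : Num.sqrt (D (grad (dh h)) (grad (dh h))) @[h --> 0^'+] --> 0.
  have c : D (grad (dh h)) (grad (dh h)) @[h --> 0^'+] --> 0.
    suff : D (grad (dh h)) (grad (dh h)) @[h --> 0^'+] -->
        Dform Pi q (fun _ _ => 0 - 0) (fun _ _ => 0 - 0) by rewrite subrr Dform_zero.
    apply: Dform_cvg => x y; apply: cvgB; exact: dh_lim.
  suff : Num.sqrt (D (grad (dh h)) (grad (dh h))) @[h --> 0^'+] --> Num.sqrt 0
    by rewrite sqrtr0.
  exact: cvg_comp c (@sqrt_continuous R 0).
apply: (squeeze_cvgr (f := fun h => - Num.sqrt (D (grad (dh h)) (grad (dh h))))
                     (h := fun h => Num.sqrt (D (grad (dh h)) (grad (dh h))))).
- apply: nearW => h; have := Y_bound h; rewrite ler_norml => /andP[-> ->] //.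
- suff : - Num.sqrt (D (grad (dh h)) (grad (dh h))) @[h --> 0^'+] --> - 0
    by rewrite oppr0.
  exact: cvgN.
- exact: S0.
Qed.


Lemma scal_div (c x y : R) : c != 0 -> (c * x) / (c * y) = x / y.
Proof. by move=> c0; rewrite invfM mulrACA mulfV // mul1r. Qed.

Let vh (h : R) (z : S) := h^-1 * gh h z.

Lemma vh_lim z : vh h z @[h --> 0^'+] --> l0 z.
Proof.
have := deriv_quot (PI_derive z t0 a0t0).
have -> : (fun h => h^-1 * (PI z (h + t0) - PI z t0)) = (fun h => vh h z).
  by apply/funext => h; rewrite /vh /gh [h + t0]addrC.
by [].
Qed.

Lemma X_lim : -2 * D (grad l0) (grad (gh h)) / rr h @[h --> 0^'+] --> -2 * N0.
Proof.
have [D0|D0] := eqVneq (D (grad l0) (grad l0)) 0.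
  have -> : (fun h => -2 * D (grad l0) (grad (gh h)) / rr h) = (fun=> 0).
    by apply/funext => h; rewrite /D (Dform_deg Hq0 _ D0) mulr0 mul0r.
  rewrite /N0 D0 sqrtr0 mulr0; exact: cvg_cst.
set D0v := D (grad l0) (grad l0) in D0 *.
have Dp : 0 < D0v by rewrite lt0r D0 /D0v Dform_ge0.
have sp : 0 < Num.sqrt D0v by rewrite sqrtr_gt0.
pose Xv := fun h => -2 * D (grad l0) (grad (vh h)) / Num.sqrt (D (grad (vh h)) (grad (vh h))).
have E : {near 0^'+, Xv =1 (fun h => -2 * D (grad l0) (grad (gh h)) / rr h)}.
  near=> h.
  have hp : 0 < h by near: h; exact: nbhs_right_gt.
  have gE : grad (vh h) = (fun x y => h^-1 * grad (gh h) x y).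
    by apply/funext => x; apply/funext => y; rewrite /grad /vh /=; ring.
  rewrite /Xv gE /D Dform_scal_r Dform_scal Dform_scal_r mulrA -expr2.
  rewrite sqrtrM ?sqr_ge0 // sqrtr_sqr gtr0_norm ?invr_gt0 //.
  rewrite -mulrA -[in RHS]mulrA; congr (_ * _).
  by rewrite scal_div // invr_neq0 // gt_eqF.
apply: cvg_trans (near_eq_cvg E) _.
have num : D (grad l0) (grad (vh h)) @[h --> 0^'+] --> D0v.
  apply: Dform_cvg => x y; first exact: cvg_cst.
  rewrite /grad; apply: cvgB; exact: vh_lim.
have den : D (grad (vh h)) (grad (vh h)) @[h --> 0^'+] --> D0v.
  apply: Dform_cvg => x y; rewrite /grad; apply: cvgB; exact: vh_lim.
have den' : Num.sqrt (D (grad (vh h)) (grad (vh h))) @[h --> 0^'+] --> Num.sqrt D0v.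
  exact: cvg_comp den (@sqrt_continuous R D0v).
have := cvgM (cvgM (cvg_cst (-2 : R)) num) (cvgV (negbT (gt_eqF sp)) den').
have -> : -2 * D0v * (Num.sqrt D0v)^-1 = -2 * N0.
  rewrite /N0 -/D0v -{1}(sqr_sqrtr (ltW Dp)) expr2.
  by field; rewrite gt_eqF.
by move=> H; exact: (H _ _ _ _).
Unshelve. all: by end_near.
Qed.


Lemma Q_lim : Q h @[h --> 0^'+] --> -2 * N0.
Proof.
have E : {near 0^'+, (fun h => -2 * D (grad l0) (grad (gh h)) / rr h +
            (- D (grad (dh h)) (grad (gh h))) / rr h) =1 Q}.
  near=> h.
  have hp : 0 < h by near: h; exact: nbhs_right_gt.
  by rewrite Q_decomp.
apply: cvg_trans (near_eq_cvg E) _.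
suff : (fun h => -2 * D (grad l0) (grad (gh h)) / rr h +
            (- D (grad (dh h)) (grad (gh h))) / rr h) @ 0^'+ --> -2 * N0 + 0.
  by rewrite addr0.
exact: cvgD X_lim Y_lim.
Unshelve. all: by end_near.
Qed.

Lemma dquot_lim : dquot (Var q) (rho Pi q) t0 p h @[h --> 0^'+] --> (-2 * N0)%:E.
Proof.
apply: cvg_EFin; first by apply: nearW.
exact: Q_lim.
Qed.

Lemma competitor (Pt : R -> S -> R) (lt : \bar R) : Pt t0 = p t0 ->
  dquot (Var q) (rho Pi q) t0 Pt h @[h --> 0^'+] --> lt ->
  ((-2 * N0)%:E <= lt)%E.
Proof.
move=> E H; apply: (cvge_to_ge H); apply: nearW => h.
rewrite /dquot lee_fin.
have := lower_bound Hst Hq0 Hdb (Pt (t0 + h)) (Pt t0).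
by rewrite E.
Qed.

Theorem main_sd : steepest_descent (Var q) (rho Pi q) t0 p.
Proof.
split.
  move=> t tt; have tp : 0 < t := lt_le_trans t0p tt; split.
    exact: (@p_pos R S Pi p Hst Hp0 Hlim0 Hder t tp).
  exact: (@p_sum R S Pi p Hst Hp0 Hlim0 Hder t tp).
split; first exact: (@smooth R S Pi p Hder t0 t0p).
exists (-2 * N0)%:E; split; first exact: dquot_lim.
move=> Pt _ _ E lt H; exact: competitor E H.
Qed.

End Main.

Theorem theorem6p3 (R : realType) (S : finType) (Pi : S -> S -> R)
    (q : S -> R) (p : R -> S -> R) :
  stochastic Pi -> irreducible Pi ->
  (forall y, 0 <= q y) -> \sum_y q y = 1 ->
  (forall y, \sum_x q x * Pi x y = q y) ->
  (forall y z, q y * kappa Pi y z = q z * kappa Pi z y) ->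
  inM (p 0) ->
  (forall y : S, p t y @[t --> (0 : R)^'+] --> p 0 y) ->
  (forall t : R, 0 < t -> forall y : S,
      is_derive t 1 (fun s => p s y) (\sum_z p t z * kappa Pi z y)) ->
  forall t0 : R, 0 < t0 ->
    steepest_descent (Var q) (rho Pi q) t0 p.
Proof.
move=> Hst Hirr Hq0 Hq1 Hstat Hdb Hp0 Hlim0 Hder t0 t0p.
exact: main_sd.
Qed.
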